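(* Let $\alpha\in(0,1)$, $0\le\gamma\le 1/\alpha$, $n_0,n\in\mathbb N$ with $n_0\le n$. Let $\xi_1,\dots,\xi_{n_0}$ be i.i.d. random variables with values in $[0,1]$ and c.d.f. $F_\xi$ satisfying $F_\xi(t)=\gamma t$ for all $t\in[0,\alpha]$, and let $\xi_{n_0+1},\dots,\xi_n$ be random variables with values in $[0,1]$, independent of $(\xi_1,\dots,\xi_{n_0})$. For $c_i=i\alpha/n$, $i=1,\dots,n$, let $R'_n=\max\{k\le n:\xi_{k:n}\le c_k\}$ (with $R'_n=-\infty$ if this set is empty) and $V'_n=|\{i\in\{1,\dots,n_0\}:\xi_i\le c_{R'_n}\}|$, where $c_{-\infty}=-\infty$. Then \[ \mathbb E\Big(\frac{V'_n}{R'_n\vee 1}\Big)=\frac{n_0}{n}\gamma\alpha. \]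
   Context: $\xi_{1:n}\le\dots\le\xi_{n:n}$ denote the order statistics of $\xi_1,\dots,\xi_n$. *)

(* Defs.v *)
From HB Require Import structures.
From mathcomp Require Import all_boot all_order all_algebra.
From mathcomp Require Import all_classical all_reals all_analysis.
Set Implicit Arguments. Unset Strict Implicit. Unset Printing Implicit Defensive.
Import Order.TTheory GRing.Theory Num.Theory.
Local Open Scope classical_set_scope.
Local Open Scope ring_scope.

(* Indices 1..n of the paper are the ordinals 0..n-1 of 'I_n; the first block
   xi_1..xi_{n0} corresponds to the ordinals i with i < n0. *)

Definition ord_stat {R : realType} {n : nat} (x : 'I_n -> R) (k : nat) : R :=
  nth 0 (sort (fun a b : R => a <= b) [seq x i | i <- enum 'I_n]) k.-1.

Definition crit {R : realType} (n : nat) (alpha : R) (k : nat) : R :=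
  k%:R * alpha / n%:R.

(* R'_n = max{k <= n : x_{k:n} <= c_k}, None standing for -oo (empty set). *)
Definition Rprime {R : realType} {n : nat} (alpha : R) (x : 'I_n -> R) : option nat :=
  if has (fun k => ord_stat x k <= crit n alpha k) (iota 1 n)
  then Some (\big[maxn/0%N]_(k <- iota 1 n | ord_stat x k <= crit n alpha k) k)
  else None.

Definition crit_R {R : realType} (n : nat) (alpha : R) (r : option nat) : \bar R :=
  match r with None => -oo%E | Some k => (crit n alpha k)%:E end.

Definition Vprime {R : realType} {n : nat} (n0 : nat) (alpha : R) (x : 'I_n -> R) : nat :=
  #|[set i : 'I_n | (i < n0)%N && ((x i)%:E <= crit_R n alpha (Rprime alpha x))%E]|.

Definition Rvee1 (r : option nat) : nat :=
  match r with None => 1%N | Some k => maxn k 1 end.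

Definition fdp_ratio {R : realType} {n : nat} (n0 : nat) (alpha : R) (x : 'I_n -> R) : R :=
  (Vprime n0 alpha x)%:R / (Rvee1 (Rprime alpha x))%:R.

(* Mutual independence of the sigma-algebras sigma(xi_i), i < n0, and
   sigma(xi_j, j >= n0): product rule on the generating pi-system of
   (Borel) rectangles; taking B i = setT gives all subfamilies. *)
Definition block_indep {d} {T : measurableType d} {R : realType}
    (P : probability T R) (n n0 : nat) (X : 'I_n -> T -> R) : Prop :=
  forall B : 'I_n -> set R, (forall i, measurable (B i)) ->
    P (\bigcap_(i in [set: 'I_n]) (X i @^-1` B i)) =
    (\big[*%E/1%E]_(i < n | (i < n0)%N) P (X i @^-1` B i) *
     P (\bigcap_(i in [set i : 'I_n | (n0 <= i)%N]) (X i @^-1` B i)))%E.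

(* Main.v *)
Require Import Defs.
From HB Require Import structures.
From mathcomp Require Import all_boot all_order all_algebra.
From mathcomp Require Import all_classical all_reals all_analysis.
From mathcomp.algebra_tactics Require Import ring.
Import Order.TTheory GRing.Theory Num.Theory.
Local Open Scope classical_set_scope.
Local Open Scope ring_scope.

Lemma fin_prob d (T : measurableType d) (R : realType) (P : probability T R)
  (A : set T) : measurable A -> P A = (fine (P A))%:E.
Proof. by move=> mA; rewrite fineK // fin_num_measure. Qed.

Lemma E_simple d (T : measurableType d) (R : realType) (P : probability T R)
  (I : finType) (a : I -> R) (A : I -> set T) :
  (forall t, measurable (A t)) ->
  ('E_P[fun w => (\sum_t a t * \1_(A t) w)%R])%E = (\sum_t a t * fine (P (A t)))%:E.
Proof.
move=> mA.
have E : (fun w => (\sum_t a t * \1_(A t) w)%R) =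
   \sum_(f <- [seq a t \o* \1_(A t) | t <- index_enum I]) f.
  rewrite sumrfctE; apply: funext => w; rewrite big_map; apply: eq_bigr => j _ /=; exact: mulrC.
rewrite E.
have hL : forall t, a t \o* \1_(A t) \in Lfun P 1.
  move=> t; apply: Lfun_scale => //.
  by apply/Lfun1_integrable; exact: integrable_indic.
rewrite expectation_sum; last by move=> f /mapP[t _ ->].
rewrite big_map -sumEFin; apply: eq_bigr => t _.
have hI : forall t, \1_(A t) \in Lfun P 1 by move=> t0; apply/Lfun1_integrable; exact: integrable_indic.
by rewrite expectationZl // expectation_indic // EFinM -fin_prob.
Qed.


Lemma indep_split d (T : measurableType d) (R : realType) (P : probability T R)
  (n0 n : nat) (xi : 'I_n -> T -> R) (B : 'I_n -> set R) (i : 'I_n) :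
  block_indep P n0 xi -> (forall j, measurable (B j)) -> (i < n0)%N ->
  P (\bigcap_(j in [set: 'I_n]) (xi j @^-1` B j)) =
  (P (xi i @^-1` B i) *
   P (\bigcap_(j in [set: 'I_n]) (xi j @^-1` (if j == i then setT else B j))))%E.
Proof.
move=> hind mB hi.
pose B' j := if j == i then setT else B j.
have mB' : forall j, measurable (B' j).
  by move=> j; rewrite /B'; case: (j == i).
rewrite (hind B mB) (hind B' mB').
rewrite (bigD1 i) //= (bigD1 i (P := fun l : 'I_n => (l < n0)%N)) //=.
rewrite /B' eqxx preimage_setT probability_setT mul1e.
have -> : \big[*%E/1%E]_(l < n | (l < n0)%N && (l != i))
      P (xi l @^-1` (if l == i then setT else B l)) =
   \big[*%E/1%E]_(l < n | (l < n0)%N && (l != i)) P (xi l @^-1` B l).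
  by apply: eq_bigr => l /andP[_ /negbTE ->].
have -> : \bigcap_(l in [set l : 'I_n | (n0 <= l)%N])
      (xi l @^-1` (if l == i then setT else B l)) =
   \bigcap_(l in [set l : 'I_n | (n0 <= l)%N]) (xi l @^-1` B l).
  apply: eq_bigcapr => l /= hl; rewrite ifF //; apply/negbTE.
  by apply: contraTneq hl => ->; rewrite -ltnNge.
by rewrite muleA.
Qed.


Lemma sorted_nth_count (R : realType) (s : seq R) (c : R) (k : nat) :
  sorted (fun a b : R => a <= b) s -> (0 < k <= size s)%N ->
  (nth 0 s k.-1 <= c) = (k <= count (fun a : R => (a <= c)%R) s)%N.
Proof.
elim: s k => [|a s IH] k //=; first by case: k.
move=> hs /andP[k0 ks].
have hmin : all (fun y => a <= y) s by apply: order_path_min => //; exact: le_trans.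
have hs' : sorted (fun a b : R => a <= b) s by exact: path_sorted hs.
have cnt0 : ~~ (a <= c) -> count (fun a => a <= c) s = 0%N.
  move=> hac; apply/eqP; rewrite -leqn0 leqNgt -has_count; apply/hasPn => y ys.
  apply: contra hac => hyc; apply: le_trans hyc.
  by move/allP: hmin => /(_ y ys).
case: k k0 ks => [//|[|k]] _ ks /=.
  by case: (boolP (a <= c)) => hac //=; rewrite cnt0.
rewrite (IH k.+1) //.
by case: (boolP (a <= c)) => hac /=; [rewrite add1n ltnS | rewrite cnt0].
Qed.

Lemma ord_stat_le (R : realType) n (x : 'I_n -> R) (c : R) k :
  (0 < k <= n)%N -> (ord_stat x k <= c) = (k <= count (fun j => (x j <= c)%R) (enum 'I_n))%N.
Proof.
move=> hk; rewrite /ord_stat sorted_nth_count.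
- by rewrite count_sort count_map.
- by apply: sort_sorted => a b; exact: le_total.
- by rewrite size_sort size_map size_enum_ord.
Qed.

Lemma card_cset n (b : pred 'I_n) :
  #|[set i : 'I_n | b i]| = (\sum_(i < n) b i)%N.
Proof.
rewrite (eq_card (B := b)); last by move=> i; rewrite /in_mem /= /in_set /= asboolb.
by rewrite -sum1_card big_mkcond.
Qed.


Definition Rsel (n : nat) (P : pred nat) : option nat :=
  if has P (iota 1 n) then Some (\max_(k <- iota 1 n | P k) k) else None.

Lemma Rsel_ext n (P Q : pred nat) : {in iota 1 n, P =1 Q} -> Rsel n P = Rsel n Q.
Proof.
move=> h; rewrite /Rsel (eq_in_has h) (big_seq_cond P) (big_seq_cond Q).
congr (if _ then Some _ else _); apply: eq_bigl => k.
by case: (boolP (k \in iota 1 n)) => // /h ->.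
Qed.

Lemma bigmax_in (s : seq nat) (P : pred nat) :
  has P s -> P (\max_(k <- s | P k) k) && (\max_(k <- s | P k) k \in s).
Proof.
elim: s => //= a s IH; rewrite big_cons inE.
case Pa: (P a) => /=.
  case: (boolP (has P s)) => hs _.
    move/andP: (IH hs) => [h1 h2].
    case: (leqP a (\max_(k <- s | P k) k)) => ha; first by rewrite h1 h2 orbT.
    by rewrite Pa eqxx.
  by rewrite big_hasC // maxn0 Pa eqxx.
by move=> /IH /andP[-> ->]; rewrite orbT.
Qed.

Lemma Rsel_Some n (P : pred nat) k0 : Rsel n P = Some k0 ->
  [/\ P k0, (1 <= k0 <= n)%N & forall k, (1 <= k <= n)%N -> P k -> (k <= k0)%N].
Proof.
rewrite /Rsel; case: ifP => // hP [<-].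
move/andP: (bigmax_in _ _ hP) => [h1 h2]; split => //.
  by move: h2; rewrite mem_iota add1n ltnS.
move=> k hk Pk; apply: leq_bigmax_seq => //.
by rewrite mem_iota add1n ltnS.
Qed.

Lemma Rsel_maxP n (P : pred nat) k0 :
  P k0 -> (1 <= k0 <= n)%N -> (forall k, (1 <= k <= n)%N -> P k -> (k <= k0)%N) ->
  Rsel n P = Some k0.
Proof.
move=> Pk0 hk0 hmax.
have hk0i : k0 \in iota 1 n by rewrite mem_iota add1n ltnS.
have hh : has P (iota 1 n) by apply/hasP; exists k0.
rewrite /Rsel hh; congr Some; apply/eqP; rewrite eqn_leq; apply/andP; split.
  apply/bigmax_leqP_seq => k; rewrite mem_iota add1n ltnS; exact: hmax.
exact: leq_bigmax_seq.
Qed.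

Lemma stepup n (f g : nat -> nat) (b : nat -> bool) k0 :
  (forall k, g k = f k + ~~ b k)%N ->
  (forall k k', (k <= k')%N -> b k -> b k') ->
  Rsel n (fun k => k <= g k)%N = Some k0 ->
  (match Rsel n (fun k => k <= f k)%N with Some r => b r | None => false end = b k0)
  /\ (b k0 -> Rsel n (fun k => k <= f k)%N = Some k0).
Proof.
move=> hg hb /Rsel_Some [Pk0 hk0 hmax].
have fg : forall k, (f k <= g k)%N by move=> k; rewrite hg leq_addr.
have part2 : b k0 -> Rsel n (fun k => k <= f k)%N = Some k0.
  move=> bk0; apply: Rsel_maxP => //.
    by move: Pk0; rewrite hg bk0 addn0.
  move=> k hk Pk; apply: hmax => //; exact: leq_trans Pk (fg k).
split => //.
case: (boolP (b k0)) => bk0; first by rewrite part2.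
case E: (Rsel n _) => [r|] //.
move: E => /Rsel_Some [Pr hr _]; apply/negbTE; apply: contra bk0 => br.
apply: hb br; apply: hmax => //; exact: leq_trans Pr (fg r).
Qed.


Section det.
Variables (R : realType) (n n0 : nat) (alpha : R).
Hypothesis ha : 0 <= alpha.

Definition fcnt (x : 'I_n -> R) k := (\sum_(j < n) (x j <= crit n alpha k)%R)%N.
Definition gcnt (x : 'I_n -> R) (i : 'I_n) k :=
  (\sum_(j < n) ((j == i) || (x j <= crit n alpha k)%R))%N.

Lemma count_sum (P : pred 'I_n) : count P (enum 'I_n) = (\sum_(j < n) P j)%N.
Proof. by rewrite enumT -sum1_count big_mkcond. Qed.

Lemma Rprime_fcnt x : Rprime alpha x = Rsel n (fun k => k <= fcnt x k)%N.
Proof.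
rewrite /Rprime -/(Rsel n (fun k => ord_stat x k <= crit n alpha k)).
apply: Rsel_ext => k; rewrite mem_iota add1n ltnS => hk.
by rewrite /= ord_stat_le // count_sum.
Qed.

Lemma g_f x i k : gcnt x i k = (fcnt x k + ~~ (x i <= crit n alpha k)%R)%N.
Proof.
rewrite /gcnt /fcnt (bigD1 i) //= eqxx add1n [in RHS](bigD1 i) //=.
rewrite (eq_bigr (fun j => nat_of_bool (x j <= crit n alpha k)%R)); last first.
  by move=> j /negbTE ->.
by case: (_ <= _)%R; rewrite /= ?addn0 // add0n addn1.
Qed.

Lemma crit_mono k k' : (k <= k')%N -> crit n alpha k <= crit n alpha k'.
Proof.
by move=> hk; rewrite /crit ler_wpM2r ?invr_ge0 ?ler0n // ler_wpM2r // ler_nat.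
Qed.

Lemma gsel x i : exists k0, Rsel n (fun k => k <= gcnt x i k)%N = Some k0.
Proof.
rewrite /Rsel; case: ifP => [_|/negP h]; first by eexists.
exfalso; apply: h; apply/hasP; exists 1%N.
  by rewrite mem_iota /= add1n ltnS (leq_ltn_trans (leq0n i) (ltn_ord i)).
by rewrite /gcnt (bigD1 i) //= eqxx.
Qed.

Lemma term_i x (i : 'I_n) k0 : Rsel n (fun k => k <= gcnt x i k)%N = Some k0 ->
  (nat_of_bool ((x i)%:E <= crit_R n alpha (Rprime alpha x))%E)%:R
     / (Rvee1 (Rprime alpha x))%:R
  = (nat_of_bool (x i <= crit n alpha k0))%:R / k0%:R :> R.
Proof.
move=> hg.
have [h1 h2] := @stepup n (fcnt x) (gcnt x i) (fun k => (x i <= crit n alpha k)%R) k0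
   (g_f x i) (fun k k' hk h => le_trans h (crit_mono k k' hk)) hg.
have [_ hk0 _] := Rsel_Some _ _ _ hg.
rewrite Rprime_fcnt.
have -> : ((x i)%:E <= crit_R n alpha (Rsel n (fun k => k <= fcnt x k)%N))%E
          = (x i <= crit n alpha k0)%R.
  rewrite -h1; case: (Rsel _ _) => [r|] /=; first by rewrite lee_fin.
  by rewrite leNgt ltNyr.
case: (boolP (x i <= crit n alpha k0)%R) => hb; last by rewrite !mul0r.
by rewrite (h2 hb) /= (maxn_idPl (andP hk0).1).
Qed.

Definition rowp (y : R) : {ffun 'I_n.+1 -> bool} :=
  [ffun k : 'I_n.+1 => (y <= crit n alpha k)%R].
Definition ones : {ffun 'I_n.+1 -> bool} := [ffun => true].
Definition Rpat (i : 'I_n) (v : {ffun 'I_n -> {ffun 'I_n.+1 -> bool}}) :=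
  Rsel n (fun k => k <= \sum_(j < n) ((j == i) || v j (inord k)))%N.
Definition coef (i : 'I_n) (k : 'I_n.+1) (v : {ffun 'I_n -> {ffun 'I_n.+1 -> bool}}) : R :=
  (nat_of_bool ((i < n0)%N && (v i == ones) && (Rpat i v == Some (k : nat))))%:R
  / (k : nat)%:R.
Definition ind (x : 'I_n -> R) (i : 'I_n) (k : 'I_n.+1)
  (v : {ffun 'I_n -> {ffun 'I_n.+1 -> bool}}) : bool :=
  (x i <= crit n alpha k)%R && [forall j, (j != i) ==> (v j == rowp (x j))].

Lemma Rpat_eq (x : 'I_n -> R) (i : 'I_n) (v : {ffun 'I_n -> {ffun 'I_n.+1 -> bool}}) : (forall j, j != i -> v j = rowp (x j)) ->
  Rpat i v = Rsel n (fun k => k <= gcnt x i k)%N.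
Proof.
move=> hv; apply: Rsel_ext => k; rewrite mem_iota add1n ltnS => /andP[_ hk] /=.
rewrite /gcnt; congr (_ <= _)%N; apply: eq_bigr => j _.
case: (boolP (j == i)) => //= hj.
by rewrite hv // ffunE inordK // ltnS.
Qed.

Lemma inner (x : 'I_n -> R) (i : 'I_n) : (i < n0)%N ->
  \sum_(k < n.+1) \sum_v coef i k v * (nat_of_bool (ind x i k v))%:R =
  (nat_of_bool ((x i)%:E <= crit_R n alpha (Rprime alpha x))%E)%:R
     / (Rvee1 (Rprime alpha x))%:R.
Proof.
move=> hi.
pose vs : {ffun 'I_n -> {ffun 'I_n.+1 -> bool}} :=
  [ffun j => if j == i then ones else rowp (x j)].
have [k0 hg] := gsel x i.
have hv : Rpat i vs = Some k0.
  by rewrite (Rpat_eq x) // => j /negbTE hj; rewrite ffunE hj.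
have [_ /andP[k01 k0n] _] := Rsel_Some _ _ _ hg.
rewrite (term_i x i k0 hg).
have step : forall k : 'I_n.+1, \sum_v coef i k v * (nat_of_bool (ind x i k v))%:R =
    coef i k vs * (nat_of_bool (x i <= crit n alpha k))%:R.
  move=> k; rewrite (bigD1 vs) //= big1 ?addr0.
    congr (_ * (nat_of_bool _)%:R); rewrite /ind; case: (_ <= _)%R => //=.
    apply/forallP => j; apply/implyP => hj; by rewrite ffunE (negbTE hj).
  move=> v hvs.
  case: (boolP (ind x i k v)) => hind; last by rewrite mulr0.
  rewrite /coef; case: (boolP (v i == ones)) => hvi; last by rewrite andbF mul0r mul0r.
  exfalso; move/negP: hvs; apply; apply/eqP/ffunP => j; rewrite ffunE.
  case: (boolP (j == i)) => hj; first by rewrite (eqP hj) (eqP hvi).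
  by move: hind => /andP[_ /forallP /(_ j) /implyP /(_ hj) /eqP].
rewrite (eq_bigr _ (fun k _ => step k)).
have hk0 : (k0 < n.+1)%N by rewrite ltnS.
rewrite (bigD1 (Ordinal hk0)) //= big1 ?addr0.
  by rewrite /coef hv hi /= ffunE eqxx eqxx /= eqxx mul1r mulrC.
move=> k hk; rewrite /coef hv.
suff -> : (Some k0 == Some (k : nat)) = false by rewrite andbF !mul0r.
apply/negbTE; apply: contra hk => /eqP [hk']; apply/eqP; apply: val_inj => /=.
by rewrite hk'.
Qed.

Lemma fdp_decomp (x : 'I_n -> R) : fdp_ratio n0 alpha x =
  \sum_(i < n) \sum_(k < n.+1) \sum_v coef i k v * (nat_of_bool (ind x i k v))%:R.
Proof.
rewrite /fdp_ratio /Vprime card_cset natr_sum mulr_suml; apply: eq_bigr => i _.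
case: (boolP (i < n0)%N) => hi; first by rewrite inner.
rewrite /= mul0r; symmetry; apply: big1 => k _; apply: big1 => v _.
by rewrite /coef (negbTE hi) /= !mul0r.
Qed.
End det.


Lemma le_meas (R : realType) (c : R) : measurable [set y : R | y <= c].
Proof.
have -> : [set y : R | y <= c] = [set` `]-oo, c]].
  by apply/seteqP; split => y /=; rewrite in_itv /=.
exact: measurable_itv.
Qed.

Lemma rowset_meas (R : realType) n (alpha : R) (u : {ffun 'I_n.+1 -> bool}) :
  measurable [set y : R | rowp R n alpha y = u].
Proof.
have -> : [set y : R | rowp R n alpha y = u] =
  \bigcap_(k in [set: 'I_n.+1])
     (if u k then [set y | y <= crit n alpha k] else ~` [set y | y <= crit n alpha k]).
  apply/seteqP; split => y /=.
    move=> <- k _; rewrite ffunE; case: ifP => h //= hy.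
    by rewrite hy in h.
  move=> h; apply/ffunP => k; rewrite ffunE; have := h k I.
  case: (u k) => //= hk; apply/negbTE/negP; exact: hk.
apply: fin_bigcap_measurable; first exact: finite_finset.
move=> k _; case: (u k); first exact: le_meas.
apply: measurableC; exact: le_meas.
Qed.

Section main.
Variables (d : measure_display) (T : measurableType d) (R : realType)
  (P : probability T R) (alpha gamma : R) (n0 n : nat)
  (xi : 'I_n -> T -> R) (F : R -> R).
Hypotheses (ha : 0 < alpha < 1) (hg : 0 <= gamma <= alpha^-1) (hn : (n0 <= n)%N)
  (hxi : forall i, measurable_fun setT (xi i))
  (hF : forall i : 'I_n, (i < n0)%N -> forall t : R,
     P [set w | xi i w <= t] = (F t)%:E)
  (hFl : forall t : R, 0 <= t <= alpha -> F t = gamma * t)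
  (hind : block_indep P n0 xi).

Local Notation V := {ffun 'I_n -> {ffun 'I_n.+1 -> bool}}.

Definition Bset (i : 'I_n) (k : 'I_n.+1) (v : V) (j : 'I_n) : set R :=
  if j == i then [set y | y <= crit n alpha k] else [set y | rowp R n alpha y = v j].
Definition Cset (i : 'I_n) (v : V) (j : 'I_n) : set R :=
  if j == i then setT else [set y | rowp R n alpha y = v j].
Definition Aev (i : 'I_n) (k : 'I_n.+1) (v : V) : set T :=
  \bigcap_(j in [set: 'I_n]) (xi j @^-1` Bset i k v j).
Definition Cev (i : 'I_n) (v : V) : set T :=
  \bigcap_(j in [set: 'I_n]) (xi j @^-1` Cset i v j).

Lemma pre_meas (j : 'I_n) (B : set R) : measurable B -> measurable (xi j @^-1` B).
Proof. by move=> mB; rewrite -[_ @^-1` _]setTI; exact: hxi. Qed.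

Lemma Bset_meas i k v j : measurable (Bset i k v j).
Proof. rewrite /Bset; case: ifP => _; [exact: le_meas | exact: rowset_meas]. Qed.
Lemma Cset_meas i v j : measurable (Cset i v j).
Proof. rewrite /Cset; case: ifP => _; [exact: measurableT | exact: rowset_meas]. Qed.

Lemma Aev_meas i k v : measurable (Aev i k v).
Proof.
apply: fin_bigcap_measurable; first exact: finite_finset.
move=> j _; apply: pre_meas; exact: Bset_meas.
Qed.
Lemma Cev_meas i v : measurable (Cev i v).
Proof.
apply: fin_bigcap_measurable; first exact: finite_finset.
move=> j _; apply: pre_meas; exact: Cset_meas.
Qed.

Lemma Aev_mem i k v w :
  (w \in Aev i k v) = ind R n alpha (fun j => xi j w) i k v.
Proof.
apply/idP/idP.
  move=> /set_mem h; apply/andP; split.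
    by have := h i I; rewrite /Bset /preimage /= eqxx.
  apply/forallP => j; apply/implyP => hj.
  by have := h j I; rewrite /Bset /preimage /= (negbTE hj) => ->.
move=> /andP[h1 /forallP h2]; apply/mem_set => j _.
rewrite /Bset /preimage /=; case: ifP => [/eqP -> //| /negbT hj].
by move: (implyP (h2 j) hj) => /eqP ->.
Qed.

Lemma Cev_mem i v w :
  (w \in Cev i v) = [forall j, (j != i) ==> (v j == rowp R n alpha (xi j w))].
Proof.
apply/idP/idP.
  move=> /set_mem h; apply/forallP => j; apply/implyP => hj.
  by have := h j I; rewrite /Cset /preimage /= (negbTE hj) => ->.
move=> /forallP h2; apply/mem_set => j _.
rewrite /Cset /preimage /=; case: ifP => [//| /negbT hj].
by move: (implyP (h2 j) hj) => /eqP ->.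
Qed.


Lemma crit_bnd (k : 'I_n.+1) : (0 < n)%N -> 0 <= crit n alpha k <= alpha.
Proof.
move=> n0p; have a0 : 0 <= alpha by case/andP: ha => /ltW.
rewrite /crit; apply/andP; split.
  by rewrite mulr_ge0 ?invr_ge0 ?ler0n // mulr_ge0 ?ler0n.
rewrite ler_pdivrMr ?ltr0n // mulrC ler_wpM2l // ler_nat -ltnS.
exact: ltn_ord.
Qed.

Lemma PA (i : 'I_n) (k : 'I_n.+1) (v : V) : (i < n0)%N ->
  fine (P (Aev i k v)) = gamma * crit n alpha k * fine (P (Cev i v)).
Proof.
move=> hi; rewrite /Aev (@indep_split _ _ _ P n0 n xi (Bset i k v) i hind (Bset_meas i k v) hi).
have -> : \bigcap_(j in [set: 'I_n])
    (xi j @^-1` (if j == i then setT else Bset i k v j)) = Cev i v.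
  by apply: eq_bigcapr => j _; rewrite /Bset /Cset; case: (j == i).
have -> : xi i @^-1` Bset i k v i = [set w | xi i w <= crit n alpha k].
  by rewrite /Bset eqxx.
rewrite hF // hFl; last by apply: crit_bnd; exact: (leq_ltn_trans (leq0n i) (ltn_ord i)).
by rewrite (fin_prob _ _ _ P _ (Cev_meas i v)) -EFinM.
Qed.

Lemma Rpat_some (i : 'I_n) (v : V) : exists2 k0, Rpat n i v = Some k0 & (1 <= k0 <= n)%N.
Proof.
have [k0 hk0] : exists k0, Rpat n i v = Some k0.
  rewrite /Rpat /Rsel; case: ifP => [_|/negP h]; first by eexists.
  exfalso; apply: h; apply/hasP; exists 1%N.
    by rewrite mem_iota /= add1n ltnS (leq_ltn_trans (leq0n i) (ltn_ord i)).
  by rewrite (bigD1 i) //= eqxx.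
exists k0 => //; by have [_ ? _] := Rsel_Some _ _ _ hk0.
Qed.

Lemma sum_k (i : 'I_n) (v : V) : \sum_(k < n.+1) coef R n n0 i k v * (gamma * crit n alpha k) =
  (nat_of_bool ((i < n0)%N && (v i == ones n)))%:R * (gamma * alpha / n%:R).
Proof.
have [k0 hk0 /andP[k01 k0n]] := Rpat_some i v.
have hk0' : (k0 < n.+1)%N by rewrite ltnS.
rewrite (bigD1 (Ordinal hk0')) //= big1 ?addr0.
  rewrite /coef hk0 /= eqxx andbT /crit /=.
  have k0nz : (k0%:R : R) != 0 by rewrite pnatr_eq0 -lt0n.
  have nnz : (n%:R : R) != 0 by rewrite pnatr_eq0 -lt0n (leq_trans k01 k0n).
  by field; rewrite nnz k0nz.
move=> k hk; rewrite /coef hk0.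
suff -> : (Some k0 == Some (k : nat)) = false by rewrite andbF !mul0r.
apply/negbTE; apply: contra hk => /eqP [hk']; apply/eqP; apply: val_inj => /=.
by rewrite hk'.
Qed.

Lemma sumC1 (i : 'I_n) :
  \sum_(v : V) (nat_of_bool (v i == ones n))%:R * fine (P (Cev i v)) = 1.
Proof.
have := E_simple _ _ _ P V (fun v => (nat_of_bool (v i == ones n))%:R)
   (fun v => Cev i v) (Cev_meas i).
have -> : (fun w => (\sum_(v : V) (nat_of_bool (v i == ones n))%:R * \1_(Cev i v) w)%R)
    = cst (1 : R).
  apply: funext => w /=.
  pose vs : V := [ffun j => if j == i then ones n else rowp R n alpha (xi j w)].
  rewrite (bigD1 vs) //= big1 ?addr0.
    rewrite ffunE eqxx eqxx mul1r indicE Cev_mem.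
    suff -> : [forall j, (j != i) ==> (vs j == rowp R n alpha (xi j w))] by [].
    by apply/forallP => j; apply/implyP => hj; rewrite ffunE (negbTE hj).
  move=> v hv; rewrite indicE Cev_mem.
  case: (boolP (v i == ones n)) => hvi; last by rewrite mul0r.
  case: (boolP [forall j, _]) => h; last by rewrite mulr0.
  exfalso; move/negP: hv; apply; apply/eqP/ffunP => j; rewrite ffunE.
  case: (boolP (j == i)) => hj; first by rewrite (eqP hj) (eqP hvi).
  by move: h => /forallP /(_ j) /implyP /(_ hj) /eqP.
by rewrite expectation_cst; case => h; rewrite -h.
Qed.

Lemma sum_lt : (\sum_(i < n) (nat_of_bool (i < n0)%N)%:R : R) = n0%:R.
Proof.
rewrite -natr_sum; congr (_%:R).
rewrite -(big_mkord xpredT (fun i => nat_of_bool (i < n0)%N)).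
rewrite (@big_cat_nat _ _ _ n0) //=.
rewrite big_nat_cond (eq_bigr (fun _ => 1%N)); last first.
  by move=> k /andP[/andP[_ ->] _].
rewrite -big_nat_cond sum_nat_const_nat muln1 subn0.
rewrite big_nat_cond big1 ?addn0 //.
by move=> k /andP[/andP[hk _] _]; rewrite ltnNge hk.
Qed.

Lemma main_res :
  ('E_P[fun w => fdp_ratio n0 alpha (fun i => xi i w)] =
     (n0%:R / n%:R * gamma * alpha)%:E)%E.
Proof.
have a0 : 0 <= alpha by case/andP: ha => /ltW.
pose I := ('I_n * ('I_n.+1 * V))%type.
pose a (t : I) := coef R n n0 t.1 t.2.1 t.2.2.
pose A (t : I) := Aev t.1 t.2.1 t.2.2.
have Hpt : (fun w => fdp_ratio n0 alpha (fun i => xi i w)) =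
   (fun w => \sum_(t : I) a t * \1_(A t) w).
  apply: funext => w; rewrite (fdp_decomp _ _ _ _ a0).
  under eq_bigr => i _ do rewrite pair_bigA.
  rewrite pair_bigA; apply: eq_bigr => t _.
  by rewrite /a /A indicE Aev_mem.
rewrite Hpt (E_simple _ _ _ P I a A); last by move=> t; exact: Aev_meas.
congr EFin.
transitivity (\sum_(i < n) \sum_(v : V)
   (\sum_(k < n.+1) coef R n n0 i k v * (gamma * crit n alpha k)) * fine (P (Cev i v))).
  symmetry; under eq_bigr => i _ do under eq_bigr => v _ do rewrite mulr_suml.
  under eq_bigr => i _ do rewrite exchange_big pair_bigA.
  rewrite pair_bigA; apply: eq_bigr => t _.
  rewrite /a /A /=.
  case: (boolP (t.1 < n0)%N) => hi; first by rewrite PA // -mulrA.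
  by rewrite /coef (negbTE hi) /= !mul0r.
under eq_bigr => i _ do under eq_bigr => v _ do rewrite sum_k.
transitivity (\sum_(i < n) (nat_of_bool (i < n0)%N)%:R * (gamma * alpha / n%:R)).
  apply: eq_bigr => i _.
  case: (boolP (i < n0)%N) => hi /=.
    rewrite mul1r; transitivity ((\sum_(v : V) (nat_of_bool (v i == ones n))%:R
        * fine (P (Cev i v))) * (gamma * alpha / n%:R)).
      by rewrite mulr_suml; apply: eq_bigr => v _; ring.
    by rewrite sumC1 mul1r.
  by rewrite mul0r; apply: big1 => v _; rewrite !mul0r.
by rewrite -mulr_suml sum_lt; ring.
Qed.
End main.


Theorem lemma2p2 (d : measure_display) (T : measurableType d) (R : realType)
  (P : probability T R) (alpha gamma : R) (n0 n : nat)
  (xi : 'I_n -> T -> R) (F : R -> R) :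
  0 < alpha < 1 ->
  0 <= gamma <= alpha^-1 ->
  (n0 <= n)%N ->
  (forall i, measurable_fun setT (xi i)) ->
  (forall i w, 0 <= xi i w <= 1) ->
  (forall i : 'I_n, (i < n0)%N -> forall t : R,
     P [set w | xi i w <= t] = (F t)%:E) ->
  (forall t : R, 0 <= t <= alpha -> F t = gamma * t) ->
  block_indep P n0 xi ->
  ('E_P[fun w => fdp_ratio n0 alpha (fun i => xi i w)] =
     (n0%:R / n%:R * gamma * alpha)%:E)%E.
Proof.
move=> ha hg hn hxi h01 hF hFl hind.
exact: (main_res _ _ _ _ _ _ _ _ _ _ ha hn hxi hF hFl hind).
Qed.
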